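(* Let $n\ge 1$ and let $X_1,\dots,X_n$ be positive random variables that are jointly continuously distributed, such that each $X_k$ has an absolutely continuous distribution function $F_k$. Let $s>0$ and let $t=t(n,s)>0$ be the unique solution of $$\sum_{k=1}^n \int_0^{t} x\, dF_k(x) = s.$$ Let $N(n,s)$ and $S_{A(n,s)}$ be as defined in the context, and let $p_n=P(N(n,s)<n)$. Then $$\mathrm E(N(n,s)) \le p_n\left(\sum_{k=1}^n F_k(t) - \frac{s-\mathrm E(S_{A(n,s)})}{t}\right) + n(1-p_n).$$
   Context: Define a total order on $\{X_1,\dots,X_n\}$ by $X_i\prec X_j$ if either $X_i<X_j$, or $X_i=X_j$ and $i<j$. Let $\pi$ be the unique permutation of $\{1,\dots,n\}$ with $X_{\pi(1)}\prec X_{\pi(2)}\prec\cdots\prec X_{\pi(n)}$. Let $A(n,s)=\{\pi(1),\dots,\pi(k)\}$ where $k$ is the largest integer in $\{0,1,\dots,n\}$ with $X_{\pi(1)}+\cdots+X_{\pi(k)}\le s$ (so $A(n,s)=\emptyset$ if $X_{\pi(1)}>s$). Then $N(n,s)=|A(n,s)|$ is the maximum number of observations among $X_1,\dots,X_n$ whose sum does not exceed $s$, and $S_{A(n,s)}=\sum_{i\in A(n,s)} X_i$ (note $S_{A(n,s)}\le s$). *)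

(* Defs.v *)
From HB Require Import structures.
From mathcomp Require Import all_boot all_order all_algebra.
From mathcomp Require Import all_classical all_reals all_analysis.
Set Implicit Arguments. Unset Strict Implicit. Unset Printing Implicit Defensive.
Import Order.TTheory GRing.Theory Num.Theory.
Local Open Scope classical_set_scope.
Local Open Scope ring_scope.

Section Defs.
Context {d : measure_display} {T : measurableType d} {R : realType}
  {P : probability T R} {n : nat}.
Variable X : 'I_n -> {RV P >-> R}.

(* The total order X_i <= X_j (non-strict version of the paper's order
   "X_i < X_j, or X_i = X_j and i < j"); it is total and antisymmetric. *)
Definition prec_le (w : T) (i j : 'I_n) : bool :=
  (X i w < X j w) || ((X i w == X j w) && (i <= j)%N).

Definition sorted_idx (w : T) : seq 'I_n := sort (prec_le w) (enum 'I_n).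

Definition Nns (s : R) (w : T) : nat :=
  \max_(k < n.+1 | \sum_(i <- take k (sorted_idx w)) X i w <= s) k.

Definition Ans (s : R) (w : T) : seq 'I_n := take (Nns s w) (sorted_idx w).
Definition SAns (s : R) (w : T) : R := \sum_(i <- Ans s w) X i w.

End Defs.

Definition abs_continuous_fun {R : realType} (F : R -> R) : Prop :=
  forall eps : R, 0 < eps -> exists2 delta : R, 0 < delta &
    forall (m : nat) (a b : 'I_m -> R),
      (forall i, a i <= b i) ->
      (forall i j, i != j -> b i <= a j \/ b j <= a i) ->
      \sum_(i < m) (b i - a i) < delta ->
      \sum_(i < m) `|F (b i) - F (a i)| < eps.

Definition lebesgue_null_n {R : realType} {n : nat} (A : set ('I_n -> R)) : Prop :=
  forall eps : R, 0 < eps -> exists a b : nat -> 'I_n -> R,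
    [/\ forall m i, a m i <= b m i,
        A `<=` \bigcup_m [set x | forall i, a m i <= x i <= b m i]
      & forall N, \sum_(m < N) \prod_(i < n) (b m i - a m i) < eps].

(* (X_1,...,X_n) jointly continuously distributed: the joint law is
   absolutely continuous w.r.t. Lebesgue measure on R^n *)
Definition jointly_continuous {d : measure_display} {T : measurableType d}
  {R : realType} {P : probability T R} {n : nat} (X : 'I_n -> {RV P >-> R}) : Prop :=
  forall A : set ('I_n -> R), lebesgue_null_n A ->
    negligible P [set w | A (fun i => X i w)].

(* Main.v *)
Require Import Defs.
From HB Require Import structures.
From mathcomp Require Import all_boot all_order all_algebra.
From mathcomp Require Import all_classical all_reals all_analysis.
From mathcomp Require Import measurable_realfun.
From mathcomp Require Import lra.
Import Order.TTheory GRing.Theory Num.Theory.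
Local Open Scope classical_set_scope.
Local Open Scope ring_scope.

Section Meas.
Context {d : measure_display} {T : measurableType d} {R : realType}.

Lemma mfin (aT : finType) (b : T -> aT) (F : aT -> T -> R) :
  (forall m, measurable_fun setT (fun w => b w == m)) ->
  (forall m, measurable_fun setT (F m)) ->
  measurable_fun setT (fun w => F (b w) w).
Proof.
move=> mb mF.
have -> : (fun w => F (b w) w) =
  (fun w => \sum_(m : aT) (if b w == m then F m w else 0)).
  apply/funext => w; rewrite (bigD1 (b w)) //= eqxx big1 ?addr0 //.
  by move=> m /negbTE; rewrite eq_sym => ->.
apply: measurable_sum => m; apply: measurable_fun_ifT => //.
Qed.

Lemma mall (I : Type) (s : seq I) (f : I -> T -> bool) :
  (forall i, measurable_fun setT (f i)) ->
  measurable_fun setT (fun w => all (f ^~ w) s).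
Proof.
move=> mf; elim: s => [|i s IH] /=; first exact: measurable_cst.
exact: measurable_and.
Qed.

Lemma mffun (I : finType) (b : T -> {ffun I -> bool}) :
  (forall i, measurable_fun setT (fun w => b w i)) ->
  forall m, measurable_fun setT (fun w => b w == m).
Proof.
move=> mb m.
have -> : (fun w => b w == m) = (fun w => all (fun i => b w i == m i) (enum I)).
  apply/funext => w; apply/eqP/allP => [-> i _ //|H].
  by apply/ffunP => i; apply/eqP/H; rewrite mem_enum.
suff H : forall i, measurable_fun setT (fun w => b w i == m i) by exact: (@mall I (enum I) _ H).
move=> i.
case: (m i).
  by have -> : (fun w => b w i == true) = (fun w => b w i) by apply/funext => w; rewrite eqb_id.
have -> : (fun w => b w i == false) = (fun w => ~~ b w i) by apply/funext => w; rewrite eqbF_neg.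
exact: measurable_neg.
Qed.


Section Prob.
Variables (P : probability T R) (n : nat) (X : 'I_n -> {RV P >-> R}) (s : R).

Let mX i : measurable_fun setT (X i) := measurable_funPT (X i).

Definition mat (w : T) : {ffun 'I_n * 'I_n -> bool} :=
  [ffun ij => prec_le X w ij.1 ij.2].
Definition sortm (m : {ffun 'I_n * 'I_n -> bool}) : seq 'I_n :=
  sort (fun i j => m (i, j)) (enum 'I_n).

Lemma mat_meas m : measurable_fun setT (fun w => mat w == m).
Proof.
apply: mffun => ij.
have -> : (fun w => mat w ij) = (fun w => prec_le X w ij.1 ij.2).
  by apply/funext => w; rewrite ffunE.
rewrite /prec_le; apply: measurable_or; first exact: measurable_fun_ltr.
apply: measurable_and => //; exact: measurable_fun_eqr.
Qed.

Lemma sorted_idxE w : sorted_idx X w = sortm (mat w).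
Proof.
rewrite /sorted_idx /sortm; congr sort.
by apply/funext => i; apply/funext => j; rewrite ffunE.
Qed.

Definition Gm m w : nat := \max_(k < n.+1 | \sum_(i <- take k (sortm m)) X i w <= s) k.

Lemma NnsE w : Nns X s w = Gm (mat w) w.
Proof. by rewrite /Nns sorted_idxE. Qed.

Lemma Gm_meas m : measurable_fun setT (fun w => (Gm m w)%:R : R).
Proof.
pose bits w : {ffun 'I_n.+1 -> bool} :=
  [ffun k : 'I_n.+1 => \sum_(i <- take k (sortm m)) X i w <= s].
have -> : (fun w => (Gm m w)%:R : R) =
    (fun w => (fun bb (_ : T) => (\max_(k < n.+1 | bb k) k)%:R : R) (bits w) w).
  by apply/funext => w /=; rewrite /Gm; congr (_%:R); apply: eq_bigl => k; rewrite ffunE.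
have mb : forall bb, measurable_fun setT (fun w => bits w == bb).
  apply: mffun => k.
  have -> : (fun w => bits w k) = (fun w => \sum_(i <- take k (sortm m)) X i w <= s).
    by apply/funext => w; rewrite ffunE.
  apply: measurable_fun_ler => //; exact: measurable_sum.
exact: (@mfin _ bits (fun bb (_ : T) => (\max_(k < n.+1 | bb k) k)%:R : R) mb
   (fun _ => measurable_cst _)).
Qed.

Lemma N_meas : measurable_fun setT (fun w => (Nns X s w)%:R : R).
Proof.
have -> : (fun w => (Nns X s w)%:R : R) = (fun w => (Gm (mat w) w)%:R).
  by apply/funext => w; rewrite NnsE.
exact: (@mfin _ mat (fun m w => (Gm m w)%:R) mat_meas Gm_meas).
Qed.

Lemma Nns_le w : (Nns X s w <= n)%N.
Proof. by apply/bigmax_leqP => k _; rewrite -ltnS ltn_ord. Qed.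

Lemma S_meas : measurable_fun setT (SAns X s).
Proof.
pose b w : {ffun 'I_n * 'I_n -> bool} * 'I_n.+1 := (mat w, inord (Nns X s w)).
pose F (mk : {ffun 'I_n * 'I_n -> bool} * 'I_n.+1) w :=
  \sum_(i <- take mk.2 (sortm mk.1)) X i w.
have -> : SAns X s = (fun w => F (b w) w).
  apply/funext => w; rewrite /SAns /Ans /F /b /= inordK ?ltnS ?Nns_le //.
  by rewrite sorted_idxE.
apply: mfin => [[m k]|mk]; last exact: measurable_sum.
have -> : (fun w => b w == (m, k)) =
   (fun w => (mat w == m) && ((Nns X s w)%:R == (k : nat)%:R :> R)).
  apply/funext => w; rewrite /b xpair_eqE eqr_nat -val_eqE /= inordK //.
  by rewrite ltnS Nns_le.
apply: measurable_and; first exact: mat_meas.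
apply: measurable_fun_eqr => //; exact: N_meas.
Qed.


Lemma pw w (t : R) :
  ((Nns X s w)%:R * t + \sum_(k < n) X k w * ((X k w <= t)%R)%:R
  <= t * \sum_(k < n) ((X k w <= t)%R)%:R + SAns X s w)%R.
Proof.
set A := Ans X s w.
have uA : uniq A by rewrite /A /Ans take_uniq // sort_uniq enum_uniq.
have sA : size A = Nns X s w.
  by rewrite /A /Ans size_takel // size_sort size_enum_ord Nns_le.
have -> : (Nns X s w)%:R * t = \sum_(k < n) (k \in A)%:R * t.
  rewrite -sA -(card_uniqP uA) -mulr_suml; congr (_ * t).
  rewrite -sumr_const big_mkcond /=; apply: eq_bigr => k _.
  by case: (k \in A).
have -> : SAns X s w = \sum_(k < n) (k \in A)%:R * X k w.
  rewrite /SAns -/A big_uniq // big_mkcond /=; apply: eq_bigr => k _.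
  by case: (k \in A); rewrite ?mul1r ?mul0r.
rewrite mulr_sumr -!big_split /=; apply: ler_sum => k _.
case: (k \in A); case: (lerP (X k w) t) => h /=;
  rewrite ?mul1r ?mul0r ?mulr1 ?mulr0 ?add0r ?addr0; lra.
Qed.


Local Open Scope ereal_scope.

Lemma cdf_int k (t : R) :
  \int[P]_w ((((X k w <= t)%R)%:R : R)%:E) = cdf (X k) t.
Proof.
have mA : measurable (X k @^-1` `]-oo, t]).
  by rewrite -[X in measurable X]setTI; apply: mX => //; exact: measurable_itv.
rewrite -[RHS]/(P (X k @^-1` `]-oo, t])) -[in RHS](setIT (X k @^-1` _)) -integral_indic //.
apply: eq_integral => w _; rewrite indicE /=.
congr ((_ : R)%:E); congr (_%:R).
idtac.
by rewrite /preimage /= mem_setE.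
Qed.


Lemma dist_int k (t : R) : (forall w, 0 < X k w)%R ->
  \int[distribution P (X k)]_(x in `[0%R, t]%classic) x%:E =
  \int[P]_w ((X k w * ((X k w <= t)%R)%:R)%:E).
Proof.
move=> Xpos.
rewrite integral_mkcond ge0_integral_distribution //.
- apply: eq_integral => w _ /=.
  rewrite patchE mem_setE in_itv /= (ltW (Xpos w)) /=.
  by case: (X k w <= t)%R; rewrite ?mulr1 ?mulr0.
- apply/(measurable_restrictT _ _).1; first exact: measurable_itv.
  exact: EFin_measurable.
- move=> y; rewrite patchE mem_setE in_itv /=.
  by case: ifP => [/andP[h _]|_] //; rewrite lee_fin.
Qed.


Lemma mb k (t : R) : measurable_fun setT (fun w => ((X k w <= t)%R)%:R : R).
Proof.
have -> : (fun w => ((X k w <= t)%R)%:R : R) =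
   (fun w => if (X k w <= t)%R then 1%R else 0%R).
  by apply/funext => w; case: ifP.
apply: measurable_fun_ifT => //; exact: measurable_fun_ler.
Qed.

Lemma key (t : R) : (0 < t)%R -> (forall k w, 0 < X k w)%R ->
  t%:E * 'E_P[fun w => (Nns X s w)%:R]
    + \sum_(k < n) \int[P]_w ((X k w * ((X k w <= t)%R)%:R)%:E)
  <= t%:E * \sum_(k < n) cdf (X k) t + 'E_P[SAns X s].
Proof.
move=> t0 Xpos.
have mXb k : measurable_fun setT (fun w => X k w * ((X k w <= t)%R)%:R)%R.
  exact: measurable_funM (mX k) (mb k t).
have Xb0 k w : (0 <= X k w * ((X k w <= t)%R)%:R)%R.
  by rewrite mulr_ge0 // ltW.
have b0 k w : (0 <= ((X k w <= t)%R)%:R :> R)%R by [].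
have N0 w : (0 <= (Nns X s w)%:R * t :> R)%R by rewrite mulr_ge0 // ltW.
have S0 w : (0 <= SAns X s w)%R.
  by rewrite /SAns sumr_ge0 // => i _; rewrite ltW.
have E1 : \int[P]_w (((Nns X s w)%:R * t
              + \sum_(k < n) X k w * ((X k w <= t)%R)%:R)%:E)%R
    = t%:E * 'E_P[fun w => (Nns X s w)%:R]
    + \sum_(k < n) \int[P]_w ((X k w * ((X k w <= t)%R)%:R)%:E).
  under eq_integral do rewrite EFinD -sumEFin.
  rewrite ge0_integralD //; last first.
  - by apply: emeasurable_sum => k; apply/measurable_EFinP.
  - by move=> w _; apply: sume_ge0 => k _; rewrite lee_fin.
  - by apply/measurable_EFinP; apply: measurable_funM => //; exact: N_meas.
  - by move=> w _; rewrite lee_fin.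
  rewrite ge0_integral_sum //; last first.
  - by move=> k w _; rewrite lee_fin.
  - by move=> k; apply/measurable_EFinP.
  congr (_ + _).
  under eq_integral do rewrite EFinM muleC.
  rewrite ge0_integralZl_EFin //.
  - by rewrite expectation.unlock.
  - by apply/measurable_EFinP; exact: N_meas.
  - exact: ltW.
have E2 : \int[P]_w ((t * \sum_(k < n) ((X k w <= t)%R)%:R + SAns X s w)%:E)%R
    = t%:E * \sum_(k < n) cdf (X k) t + 'E_P[SAns X s].
  under eq_integral do rewrite EFinD EFinM -sumEFin.
  rewrite ge0_integralD //; last first.
  - by apply/measurable_EFinP; exact: S_meas.
  - by move=> w _; rewrite lee_fin.
  - apply: emeasurable_funM => //.
    by apply: emeasurable_sum => k; apply/measurable_EFinP; exact: mb.
  - by move=> w _; apply: mule_ge0; [rewrite lee_fin ltW | apply: sume_ge0 => k _; rewrite lee_fin].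
  rewrite expectation.unlock; congr (_ + _).
  rewrite ge0_integralZl_EFin //; try (by move=> w _; apply: sume_ge0 => k _; rewrite lee_fin);
    try (by apply: emeasurable_sum => k; apply/measurable_EFinP; exact: mb); try exact: ltW.
  rewrite ge0_integral_sum //; try (by move=> k w _; rewrite lee_fin);
    try (by move=> k; apply/measurable_EFinP; exact: mb).
  by congr (_ * _); apply: eq_bigr => k _; exact: cdf_int.
rewrite -E1 -E2; apply: ge0_le_integral => //.
- by move=> w _; rewrite lee_fin addr_ge0 // sumr_ge0.
- apply/measurable_EFinP.
  have h1 := measurable_funM N_meas (measurable_cst t).
  have h2 := measurable_sum (index_enum 'I_n) mXb.
  have h := measurable_funD h1 h2. exact h.
- apply/measurable_EFinP.
  have h1 := measurable_funM (measurable_cst t)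
      (measurable_sum (index_enum 'I_n) (fun k => mb k t)).
  have h := measurable_funD h1 S_meas. exact h.
- by move=> w _; rewrite lee_fin; exact: pw.
Qed.


Lemma S_le_s w : (0 < s)%R -> (SAns X s w <= s)%R.
Proof.
move=> s0.
have P0 : (\sum_(i <- take (@ord0 n) (sorted_idx X w)) X i w <= s)%R.
  by rewrite take0 big_nil ltW.
rewrite /SAns /Ans /Nns (bigop.bigmax_eq_arg ord0 P0).
by case: arg_maxnP.
Qed.

End Prob.
End Meas.

Theorem mainTheorem2 (d : measure_display) (T : measurableType d) (R : realType)
  (P : probability T R) (n : nat) (X : 'I_n -> {RV P >-> R}) (s t : R) :
  (0 < n)%N ->
  (forall k w, 0 < X k w) ->
  jointly_continuous X ->
  (forall k, abs_continuous_fun (fun x => fine (cdf (X k) x))) ->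
  0 < s ->
  0 < t ->
  (\sum_(k < n) \int[distribution P (X k)]_(x in `[0%R, t]%classic) x%:E = s%:E)%E ->
  (forall t' : R, 0 < t' ->
     (\sum_(k < n) \int[distribution P (X k)]_(x in `[0%R, t']%classic) x%:E = s%:E)%E ->
     t' = t) ->
  let p := P [set w | (Nns X s w < n)%N] in
  ('E_P[fun w => (Nns X s w)%:R]
    <= p * (\sum_(k < n) cdf (X k) t - (s%:E - 'E_P[SAns X s]) * (t^-1)%:E)
       + (n%:R)%:E * (1 - p))%E.
Proof.
move=> n0 Xpos _ _ s0 t0 Hs _; cbv zeta.
set p := P [set w | _].
have K := @key _ _ _ P n X s t t0 Xpos.
have Es : (\sum_(k < n) \int[P]_w ((X k w * ((X k w <= t)%R)%:R)%:E))%E = s%:E.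
  by rewrite -Hs; apply: eq_bigr => k _; rewrite dist_int.
rewrite Es in K.
have EN0 : (0 <= 'E_P[fun w => (Nns X s w)%:R])%E.
  by apply: expectation_ge0 => w.
have ENn : ('E_P[fun w => (Nns X s w)%:R] <= (n%:R)%:E)%E.
  rewrite -(@expectation_cst _ _ _ P (n%:R)); apply: expectation_le => //.
  - exact: N_meas.
  - by apply: aeW => w; rewrite ler_nat Nns_le.
have ES0 : (0 <= 'E_P[SAns X s])%E.
  by apply: expectation_ge0 => w; rewrite /SAns sumr_ge0 // => i _; rewrite ltW.
have ESs : ('E_P[SAns X s] <= s%:E)%E.
  rewrite -(@expectation_cst _ _ _ P s); apply: expectation_le => //.
  - exact: S_meas.
  - by move=> w; rewrite /SAns sumr_ge0 // => i _; rewrite ltW.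
  - by move=> w; rewrite ltW.
  - by apply: aeW => w; exact: S_le_s.
have mp : measurable [set w | (Nns X s w < n)%N].
  have -> : [set w | (Nns X s w < n)%N] =
      (fun w => (Nns X s w)%:R : R) @^-1` `]-oo, (n%:R : R)[.
    by apply/seteqP; split => w /=; rewrite in_itv /= ltr_nat.
  rewrite -[X in measurable X]setTI; apply: N_meas => //; exact: measurable_itv.
have p0 : (0 <= p)%E by exact: measure_ge0.
have p1 : (p <= 1)%E by exact: probability_le1.
have Cfin k : (cdf (X k) t = (fine (cdf (X k) t))%:E)%E.
  rewrite fineK // ge0_fin_numE ?cdf_ge0 //.
  exact: (le_lt_trans (cdf_le1 _ _) (ltry _)).
rewrite (eq_bigr _ (fun k _ => Cfin k)) sumEFin in K *.
set c := (\sum_(k < n) fine (cdf (X k) t))%R in K *.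
have Een : ('E_P[fun w => (Nns X s w)%:R] = (fine 'E_P[fun w => (Nns X s w)%:R])%:E)%E.
  by rewrite fineK // ge0_fin_numE // (le_lt_trans ENn (ltry _)).
have Ees : ('E_P[SAns X s] = (fine 'E_P[SAns X s])%:E)%E.
  by rewrite fineK // ge0_fin_numE // (le_lt_trans ESs (ltry _)).
have Ep : p = (fine p)%:E.
  by rewrite fineK // ge0_fin_numE // (le_lt_trans p1 (ltry _)).
rewrite Een Ees Ep in K ENn EN0 ESs ES0 p0 p1 *.
move: (fine _) (fine _) (fine p) K ENn EN0 ESs ES0 p0 p1 => en es pr.
rewrite -!EFinM -!EFinD !lee_fin => K ENn EN0 ESs ES0 p0 p1.
have H1 : (s - en) / t <= c - es.
  by rewrite ler_pdivrMr //; lra.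
have H2 : es <= c - (s - en) / t by lra.
have H3 : 0 <= pr * (c - (s - en) / t - es) by rewrite mulr_ge0 // subr_ge0.
have H4 : 0 <= (1 - pr) * (n%:R - es) by rewrite mulr_ge0 // subr_ge0.
lra.
Qed.
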